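(* For all rigid analytically trivial dual $t$-motives $H_0,H_1$, the natural map $\mathrm{Hom}_{\bar k[t,\sigma]}(H_0,H_1)\to\mathrm{Hom}_{\mathbb F_q[t]}(H_0^{\mathrm{Betti}},H_1^{\mathrm{Betti}})$ is injective and its cokernel has no $\mathbb F_q[t]$-torsion.
   Context: $\bar k$ is the algebraic closure of $k=\mathbb F_q(T)$ in $\mathbb C_\infty$ (completion of an algebraic closure of $\mathbb F_q((1/T))$, $|T|_\infty=q$). $\mathbb C_\infty\{t\}$ is the ring of power series over $\mathbb C_\infty$ converging on $|t|_\infty\le1$; for $g=\sum a_it^i$, $g^{(-1)}=\sum a_i^{1/q}t^i$. $\bar k[t,\sigma]$ is generated over $\bar k$ by a central variable $t$ and $\sigma$ with $\sigma x=x^{q^{-1}}\sigma$. A dual $t$-motive is a left $\bar k[t,\sigma]$-module free of finite rank over $\bar k[t]$ and over $\bar k[\sigma]$ with $(t-T)^nH\subset\sigma H$ for $n\gg0$. For a dual $t$-motive $H$, $\tilde H=\mathbb C_\infty\{t\}\otimes_{\bar k[t]}H$ with $\sigma(g\otimes h)=g^{(-1)}\otimes\sigma h$, and $H^{\mathrm{Betti}}$ is the $\mathbb F_q[t]$-module of $\sigma$-invariants of $\tilde H$; $H$ is rigid analytically trivial if the natural map $\mathbb C_\infty\{t\}\otimes_{\mathbb F_q[t]}H^{\mathrm{Betti}}\to\tilde H$ is bijective. A morphism $H_0\to H_1$ induces an $\mathbb F_q[t]$-linear map $H_0^{\mathrm{Betti}}\to H_1^{\mathrm{Betti}}$ by $\mathbb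 C_\infty\{t\}$-linear extension. *)

(* Defs.v *)
From HB Require Import structures.
From mathcomp Require Import all_boot all_order all_algebra.
From mathcomp Require Import boolp reals.
From Stdlib Require Lists.List.
Set Implicit Arguments. Unset Strict Implicit. Unset Printing Implicit Defensive.
Import Order.TTheory GRing.Theory Num.Theory.
Local Open Scope ring_scope.

Lemma exists_qroot (F : closedFieldType) (q : nat) (x : F) :
  exists y : F, (q == 0%N) || (y ^+ q == x).
Proof.
case: q => [|n]; first by exists 0.
have [y hy] := @solve_monicpoly F n.+1 (fun i => if i == 0%N then x else 0) isT.
exists y; apply/orP; right; apply/eqP; rewrite hy.
rewrite big_ord_recl /= expr0 mulr1 big1 ?addr0 // => i _.
by rewrite mul0r.
Qed.

(** x^{1/q} (for q > 0 this is the unique y with y^q = x in char p, q = p^e) *)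
Definition qroot (F : closedFieldType) (q : nat) (x : F) : F :=
  xchoose (exists_qroot q x).

Section Defs.
Variables (R : realType) (C : closedFieldType) (absC : C -> R) (q : nat) (T : C).

Definition cvg_to (u : nat -> C) (l : C) : Prop :=
  forall e : R, 0 < e -> exists N, forall n, (N <= n)%N -> absC (u n - l) < e.
Definition cauchy (u : nat -> C) : Prop :=
  forall e : R, 0 < e -> exists N, forall m n, (N <= m)%N -> (N <= n)%N ->
    absC (u m - u n) < e.

(** The variable T of k is the element
    T : C; polynomials in {poly C} are used both for F_q[T] (evaluated at T)
    and for the polynomial rings in the central variable t ('X). *)
Definition Fq (x : C) : Prop := x ^+ q = x.
Definition Fq_poly (p : {poly C}) : Prop := forall i, Fq p`_i.
Definition in_k (x : C) : Prop :=
  exists a b : {poly C}, [/\ Fq_poly a, Fq_poly b, b.[T] != 0 & x = a.[T] / b.[T]].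
Definition in_kbar (x : C) : Prop :=
  exists p : {poly C}, [/\ p != 0, forall i, in_k p`_i & root p x].
Definition kbar_poly (p : {poly C}) : Prop := forall i, in_kbar p`_i.

(** F_q((1/T)) = closure of k in C; its algebraic closure; density *)
Definition in_Kinf (x : C) : Prop :=
  exists u : nat -> C, (forall n, in_k (u n)) /\ cvg_to u x.
Definition alg_Kinf (x : C) : Prop :=
  exists p : {poly C}, [/\ p != 0, forall i, in_Kinf p`_i & root p x].

(** C is (a model of) C_infty: characteristic p with q = p^e, an absolute
    value that is multiplicative and ultrametric with |T| = q, C complete,
    algebraically closed (closedFieldType), and the algebraic closure of
    F_q((1/T)) = closure of k is dense in C. *)
Definition is_Cinf : Prop :=
  [/\ exists p e : nat, [/\ prime p, (0 < e)%N, q = (p ^ e)%N & p \in [pchar C]],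
      forall x, 0 <= absC x /\ (absC x = 0 <-> x = 0),
      forall x y, absC (x * y) = absC x * absC y,
      forall x y, absC (x + y) <= Num.max (absC x) (absC y) &
      [/\ absC T = q%:R,
      forall u, cauchy u -> exists l, cvg_to u l &
      forall x, exists u, (forall n, alg_Kinf (u n)) /\ cvg_to u x]].

Definition series := nat -> C.
Definition in_Tate (g : series) : Prop :=
  forall z, absC z <= 1 -> exists l, cvg_to (fun n => \sum_(i < n) g i * z ^+ i) l.
Definition smul (g h : series) : series :=
  fun n => \sum_(i < n.+1) g i * h (n - i)%N.
Definition pmul (p : {poly C}) (g : series) : series :=
  fun n => \sum_(i < n.+1) p`_i * g (n - i)%N.
Definition sadd (g h : series) : series := fun n => g n + h n.
Definition stwist (g : series) : series := fun n => qroot q (g n).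

(** A dual t-motive H of rank r over \bar k[t] is identified with \bar k[t]^r
    (column vectors), sigma acting by  sigma h = Phi * h^{(-1)},  where the
    columns of Phi are the sigma e_j of the standard basis e_j. *)
Definition ptwist (p : {poly C}) : {poly C} := \poly_(i < size p) qroot q p`_i.
Definition vtwist r (h : 'cV[{poly C}]_r) : 'cV[{poly C}]_r := map_mx ptwist h.

Variable r : nat.
Implicit Types (Phi : 'M[{poly C}]_r) (h : 'cV[{poly C}]_r).

Definition in_H h : Prop := forall i, kbar_poly (h i 0).
Definition sigH Phi h : 'cV[{poly C}]_r := Phi *m vtwist h.
(** action of sum_j c_j sigma^j  (P = sum_j c_j X^j encodes the coefficients) *)
Definition sig_act Phi (P : {poly C}) h : 'cV[{poly C}]_r :=
  \sum_(j < size P) (P`_j)%:P *: iter j (sigH Phi) h.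

Definition is_dual_tmotive Phi : Prop :=
  [/\ (* H = \bar k[t]^r is stable under sigma *)
      forall i j, kbar_poly (Phi i j),
      (* free of finite rank over \bar k[sigma] *)
      exists s (b : 'I_s -> 'cV[{poly C}]_r),
        [/\ forall l, in_H (b l),
            forall h, in_H h -> exists P : 'I_s -> {poly C},
              (forall l, kbar_poly (P l)) /\ h = \sum_l sig_act Phi (P l) (b l)
          & forall P : 'I_s -> {poly C}, (forall l, kbar_poly (P l)) ->
              \sum_l sig_act Phi (P l) (b l) = 0 -> forall l, P l = 0] &
      exists n, forall h, in_H h -> exists h', in_H h' /\
        ('X - T%:P) ^+ n *: h = sigH Phi h'].

Definition svec := 'I_r -> series.
Definition in_Htilde (v : svec) : Prop := forall i, in_Tate (v i).
Definition sigT Phi (v : svec) : svec :=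
  fun i n => \sum_(j < r) pmul (Phi i j) (stwist (v j)) n.
Definition in_Betti Phi (v : svec) : Prop :=
  in_Htilde v /\ forall i n, sigT Phi v i n = v i n.
Definition vadd (v w : svec) : svec := fun i n => v i n + w i n.
Definition vact (a : {poly C}) (v : svec) : svec := fun i => pmul a (v i).

(** ** C{t} (x)_{F_q[t]} H^Betti, via the free abelian group on pairs *)
Definition pair_t := (series * svec)%type.
Definition formal := seq (int * pair_t).
Definition valid_formal Phi (l : formal) : Prop :=
  forall x, Stdlib.Lists.List.In x l -> in_Tate x.2.1 /\ in_Betti Phi x.2.2.
Definition coef (l : formal) (p : pair_t) : int :=
  \sum_(x <- l) (if `[< x.2 = p >] then x.1 else 0).
Definition is_relation Phi (m : formal) : Prop :=
  (exists g g' b, [/\ in_Tate g, in_Tate g', in_Betti Phi b &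
     m = [:: (1, (sadd g g', b)); (-1, (g, b)); (-1, (g', b))]]) \/
  (exists g b b', [/\ in_Tate g, in_Betti Phi b, in_Betti Phi b' &
     m = [:: (1, (g, vadd b b')); (-1, (g, b)); (-1, (g, b'))]]) \/
  (exists a g b, [/\ Fq_poly a, in_Tate g, in_Betti Phi b &
     m = [:: (1, (pmul a g, b)); (-1, (g, vact a b))]]).
Definition tensor_zero Phi (l : formal) : Prop :=
  exists rs : seq (int * formal),
    (forall x, Stdlib.Lists.List.In x rs -> is_relation Phi x.2) /\
    forall p, coef l p = \sum_(x <- rs) x.1 * coef x.2 p.
Definition nat_img (l : formal) : svec :=
  fun i n => \sum_(x <- l) (x.1)%:~R * smul x.2.1 (x.2.2 i) n.

Definition rigid_analytically_trivial Phi : Prop :=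
  (forall v, in_Htilde v -> exists l, valid_formal Phi l /\
      forall i n, nat_img l i n = v i n) /\
  (forall l, valid_formal Phi l -> (forall i n, nat_img l i n = 0) ->
      tensor_zero Phi l).

End Defs.

Section Morph.
Variables (R : realType) (C : closedFieldType) (absC : C -> R) (q : nat) (T : C).
Variables (r0 r1 : nat) (Phi0 : 'M[{poly C}]_r0) (Phi1 : 'M[{poly C}]_r1).

Definition is_morphism (f : 'cV[{poly C}]_r0 -> 'cV[{poly C}]_r1) : Prop :=
  [/\ forall h, in_H q T h -> in_H q T (f h),
      forall h h', in_H q T h -> in_H q T h' -> f (h + h') = f h + f h',
      forall c h, in_kbar q T c -> in_H q T h -> f (c%:P *: h) = c%:P *: f h,
      forall h, in_H q T h -> f ('X *: h) = 'X *: f h &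
      forall h, in_H q T h -> f (sigH q Phi0 h) = sigH q Phi1 (f h)].

Definition morph_mx (f : 'cV[{poly C}]_r0 -> 'cV[{poly C}]_r1) : 'M[{poly C}]_(r1, r0) :=
  \matrix_(i, j) f (delta_mx j 0) i 0.
Definition betti_map (f : 'cV[{poly C}]_r0 -> 'cV[{poly C}]_r1) (v : svec C r0) : svec C r1 :=
  fun i n => \sum_(j < r0) pmul (morph_mx f i j) (v j) n.

(** F_q[t]-linear maps H0^Betti -> H1^Betti (only values on H0^Betti matter) *)
Definition is_Fqt_hom (psi : svec C r0 -> svec C r1) : Prop :=
  [/\ forall v, in_Betti absC q Phi0 v -> in_Betti absC q Phi1 (psi v),
      forall v w, in_Betti absC q Phi0 v -> in_Betti absC q Phi0 w ->
        forall i n, psi (vadd v w) i n = vadd (psi v) (psi w) i n &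
      forall a v, Fq_poly q a -> in_Betti absC q Phi0 v ->
        forall i n, psi (vact a v) i n = vact a (psi v) i n].
End Morph.

(* Main.v *)
Require Import Defs.
From HB Require Import structures.
From mathcomp Require Import all_boot all_order all_algebra.
From mathcomp Require Import boolp reals.
Set Implicit Arguments. Unset Strict Implicit. Unset Printing Implicit Defensive.
Import Order.TTheory GRing.Theory Num.Theory.
Local Open Scope ring_scope.

Section SubF.
Variables (E : fieldType) (S : divringClosed E).
Inductive KB := mkKB x & x \in S.
Definition vKB u := let: mkKB x _ := u in x.
HB.instance Definition _ := [isSub for vKB].
HB.instance Definition _ := [Choice of KB by <:].
HB.instance Definition _ := [SubChoice_isSubUnitRing of KB by <:].
HB.instance Definition _ := [SubNzRing_isSubComNzRing of KB by <:].
HB.instance Definition _ := [SubComUnitRing_isSubIntegralDomain of KB by <:].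
HB.instance Definition _ := [SubIntegralDomain_isSubField of KB by <:].

Definition algS (x : E) := exists p : {poly E}, [/\ p != 0, forall i, p`_i \in S & root p x].

Lemma algS_alg x : algS x -> algebraicOver (val : KB -> E) x.
Proof.
case=> p [pn0 pS px].
pose pK : {poly KB} := \poly_(i < size p) insubd (0 : KB) p`_i.
have hp : map_poly val pK = p.
  apply/polyP => i; rewrite coef_map_id0 //= coef_poly.
  case: ltnP => hi; first by rewrite insubdK ?pS.
  by rewrite nth_default.
exists pK; last by rewrite hp.
by apply: contra pn0 => /eqP h; rewrite -hp h map_poly0.
Qed.

Lemma alg_algS x : algebraicOver (val : KB -> E) x -> algS x.
Proof.
case=> pK pn0 px; exists (map_poly val pK); split => //.
  by rewrite map_poly_eq0.
by move=> i; rewrite coef_map_id0 //; apply: valP.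
Qed.

Lemma algS_add x y : algS x -> algS y -> algS (x + y).
Proof. by move=> /algS_alg hx /algS_alg hy; apply/alg_algS/algebraic_add. Qed.
Lemma algS_mul x y : algS x -> algS y -> algS (x * y).
Proof. by move=> /algS_alg hx /algS_alg hy; apply/alg_algS/algebraic_mul. Qed.
Lemma algS_opp x : algS x -> algS (- x).
Proof. by move=> /algS_alg hx; apply/alg_algS/algebraic_opp. Qed.
Lemma algS_in x : x \in S -> algS x.
Proof.
move=> hx; have -> : x = val (Sub x hx : KB) by rewrite SubK.
by apply/alg_algS/algebraic_id.
Qed.
Lemma algS_inv x : algS x -> algS x^-1.
Proof. by move=> /algS_alg hx; apply/alg_algS/algebraic_inv. Qed.

Lemma liftS (P : {poly E}) : (forall i, P`_i \in S) ->
  exists PK : {poly KB}, map_poly val PK = P.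
Proof.
move=> pS; exists (\poly_(i < size P) insubd (0 : KB) P`_i).
apply/polyP => i; rewrite coef_map_id0 //= coef_poly.
case: ltnP => hi; first by rewrite insubdK ?pS.
by rewrite nth_default.
Qed.

Lemma divp_inS (P D : {poly E}) : (forall i, P`_i \in S) -> (forall i, D`_i \in S) ->
  forall i, (P %/ D)`_i \in S.
Proof.
move=> /liftS [PK <-] /liftS [DK <-] i.
by rewrite -map_divp coef_map_id0 //; apply: valP.
Qed.
End SubF.

Section Frob.
Variables (C : closedFieldType) (q p e : nat).
Hypotheses (pp : prime p) (e0 : (0 < e)%N) (qE : q = (p ^ e)%N) (pC : p \in [pchar C]).

Lemma qnat : (GRing.pchar C).-nat q.
Proof. by rewrite qE pnatX (pnatE _ pp) pC. Qed.

Lemma q_gt1 : (1 < q)%N.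
Proof. rewrite qE; have := prime_gt1 pp; case: e e0 => // n _ h.
by rewrite expnS (leq_trans h) // leq_pmulr // expn_gt0 prime_gt0. Qed.

Lemma frobD (x y : C) : (x + y) ^+ q = x ^+ q + y ^+ q.
Proof. exact: exprDn_pchar qnat. Qed.
Lemma frobN (x : C) : (- x) ^+ q = - x ^+ q.
Proof. exact: exprNn_pchar qnat. Qed.
Lemma frobB (x y : C) : (x - y) ^+ q = x ^+ q - y ^+ q.
Proof. by rewrite frobD frobN. Qed.

Lemma frob_inj (x y : C) : x ^+ q = y ^+ q -> x = y.
Proof.
move=> /eqP; rewrite -subr_eq0 -frobB expf_eq0 subr_eq0 => /andP[_ /eqP] //.
Qed.

Lemma qrootK (x : C) : qroot q x ^+ q = x.
Proof.
have /orP[|/eqP //] := xchooseP (exists_qroot q x).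
by have := q_gt1; case: q.
Qed.

Lemma qroot_frob (x : C) : qroot q (x ^+ q) = x.
Proof. by apply: frob_inj; rewrite qrootK. Qed.

Lemma qrootD (x y : C) : qroot q (x + y) = qroot q x + qroot q y.
Proof. by apply: frob_inj; rewrite frobD !qrootK. Qed.
Lemma qrootM (x y : C) : qroot q (x * y) = qroot q x * qroot q y.
Proof. by apply: frob_inj; rewrite exprMn !qrootK. Qed.
Lemma qroot0 : qroot q (0 : C) = 0.
Proof. by apply: frob_inj; rewrite qrootK expr0n; have := q_gt1; case: q. Qed.
Lemma qroot1 : qroot q (1 : C) = 1.
Proof. by apply: frob_inj; rewrite qrootK expr1n. Qed.
Lemma qrootFq (x : C) : Fq q x -> qroot q x = x.
Proof. by move=> h; apply: frob_inj; rewrite qrootK h. Qed.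
End Frob.
From mathcomp Require Import ring zify.

Section KB.
Variables (C : closedFieldType) (q p e : nat).
Hypotheses (pp : prime p) (e0 : (0 < e)%N) (qE : q = (p ^ e)%N) (pC : p \in [pchar C]).
Variable T : C.

Lemma Fq0 : Fq q (0 : C).
Proof. by rewrite /Fq expr0n; have := q_gt1 pp e0 qE; case: q. Qed.
Lemma Fq1 : Fq q (1 : C).
Proof. by rewrite /Fq expr1n. Qed.
Lemma FqD (x y : C) : Fq q x -> Fq q y -> Fq q (x + y).
Proof. by rewrite /Fq (frobD pp qE pC) => -> ->. Qed.
Lemma FqN (x : C) : Fq q x -> Fq q (- x).
Proof. by rewrite /Fq (frobN pp qE pC) => ->. Qed.
Lemma FqM (x y : C) : Fq q x -> Fq q y -> Fq q (x * y).
Proof. by rewrite /Fq exprMn => -> ->. Qed.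
Lemma Fq_sum (I : Type) (s : seq I) (P : pred I) (F : I -> C) :
  (forall i, P i -> Fq q (F i)) -> Fq q (\sum_(i <- s | P i) F i).
Proof. move=> h; apply: (big_ind (Fq q)) => //; [exact: Fq0 | exact: FqD]. Qed.

Lemma FqpD (a b : {poly C}) : Fq_poly q a -> Fq_poly q b -> Fq_poly q (a + b).
Proof. by move=> ha hb i; rewrite coefD; apply: FqD. Qed.
Lemma FqpN (a : {poly C}) : Fq_poly q a -> Fq_poly q (- a).
Proof. by move=> ha i; rewrite coefN; apply: FqN. Qed.
Lemma FqpM (a b : {poly C}) : Fq_poly q a -> Fq_poly q b -> Fq_poly q (a * b).
Proof. by move=> ha hb i; rewrite coefM; apply: Fq_sum => j _; apply: FqM. Qed.
Lemma FqpC (c : C) : Fq q c -> Fq_poly q c%:P.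
Proof. by move=> hc i; rewrite coefC; case: eqP => _ //; apply: Fq0. Qed.

Definition kpred : pred C := fun x => `[< in_k q T x >].

Lemma kpred_closed : GRing.divring_closed kpred.
Proof.
split.
- apply/asboolP; exists 1, 1; split; rewrite ?hornerC ?divr1 ?oner_eq0 //;
  exact: FqpC Fq1.
- move=> x y /asboolP [a [b [ha hb hbT ->]]] /asboolP [c [d [hc hd hdT ->]]].
  apply/asboolP; exists (a * d - c * b), (b * d); split.
  + by apply: FqpD; [apply: FqpM | apply/FqpN/FqpM].
  + exact: FqpM.
  + by rewrite hornerM mulf_neq0.
  + rewrite !hornerE; field; exact/andP.
- move=> x y /asboolP [a [b [ha hb hbT ->]]] /asboolP [c [d [hc hd hdT ->]]].
  apply/asboolP; have [c0|c0] := eqVneq c.[T] 0.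
    exists 0, 1; split; rewrite ?hornerC ?oner_eq0 //; try exact: FqpC Fq0;
      try exact: FqpC Fq1.
    by rewrite c0 mul0r invr0 mulr0 mul0r.
  exists (a * d), (b * c); split; try exact: FqpM.
  + by rewrite hornerM mulf_neq0.
  + rewrite !hornerE; field; rewrite c0 hbT hdT //.
Qed.

HB.instance Definition _ := GRing.isDivringClosed.Build C kpred kpred_closed.
Definition kS : divringClosed C := GRing.DivringClosed.clone C kpred _.

Lemma kbar_algS (x : C) : in_kbar q T x <-> algS kS x.
Proof.
split=> -[P [P0 Pk Px]]; exists P; split => // i.
  by apply/asboolP.
by apply/asboolP; apply: Pk.
Qed.

Lemma kbarD (x y : C) : in_kbar q T x -> in_kbar q T y -> in_kbar q T (x + y).
Proof. by move=> /kbar_algS hx /kbar_algS hy; apply/kbar_algS/algS_add. Qed.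
Lemma kbarM (x y : C) : in_kbar q T x -> in_kbar q T y -> in_kbar q T (x * y).
Proof. by move=> /kbar_algS hx /kbar_algS hy; apply/kbar_algS/algS_mul. Qed.
Lemma kbarN (x : C) : in_kbar q T x -> in_kbar q T (- x).
Proof. by move=> /kbar_algS hx; apply/kbar_algS/algS_opp. Qed.
Lemma kbar_k (x : C) : in_k q T x -> in_kbar q T x.
Proof. by move=> h; apply/kbar_algS/algS_in/asboolP. Qed.
Lemma kbar_Fq (x : C) : Fq q x -> in_kbar q T x.
Proof.
move=> h; apply: kbar_k; exists x%:P, 1; split; rewrite ?hornerC ?divr1 ?oner_eq0 //.
  exact: FqpC. exact: FqpC Fq1.
Qed.
Lemma kbar0 : in_kbar q T 0. Proof. exact: kbar_Fq Fq0. Qed.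
Lemma kbar1 : in_kbar q T 1. Proof. exact: kbar_Fq Fq1. Qed.
Lemma kbar_sum (I : Type) (s : seq I) (P : pred I) (F : I -> C) :
  (forall i, P i -> in_kbar q T (F i)) -> in_kbar q T (\sum_(i <- s | P i) F i).
Proof. move=> h; apply: (big_ind (in_kbar q T)) => //; [exact: kbar0 | exact: kbarD]. Qed.

Lemma kbarpD (a b : {poly C}) : kbar_poly q T a -> kbar_poly q T b -> kbar_poly q T (a + b).
Proof. by move=> ha hb i; rewrite coefD; apply: kbarD. Qed.
Lemma kbarpN (a : {poly C}) : kbar_poly q T a -> kbar_poly q T (- a).
Proof. by move=> ha i; rewrite coefN; apply: kbarN. Qed.
Lemma kbarpM (a b : {poly C}) : kbar_poly q T a -> kbar_poly q T b -> kbar_poly q T (a * b).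
Proof. by move=> ha hb i; rewrite coefM; apply: kbar_sum => j _; apply: kbarM. Qed.
Lemma kbarpC (c : C) : in_kbar q T c -> kbar_poly q T c%:P.
Proof. by move=> hc i; rewrite coefC; case: eqP => _ //; apply: kbar0. Qed.
Lemma kbarpX : kbar_poly q T 'X.
Proof. by move=> i; rewrite coefX; case: eqP => _; [apply: kbar1 | apply: kbar0]. Qed.
Lemma kbarp_sum (I : Type) (s : seq I) (P : pred I) (F : I -> {poly C}) :
  (forall i, P i -> kbar_poly q T (F i)) -> kbar_poly q T (\sum_(i <- s | P i) F i).
Proof.
move=> h; apply: (big_ind (kbar_poly q T)) => //; last exact: kbarpD.
by rewrite -[0]/(0%:P); apply: kbarpC kbar0.
Qed.
Lemma kbarp_Fq (a : {poly C}) : Fq_poly q a -> kbar_poly q T a.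
Proof. by move=> h i; apply: kbar_Fq. Qed.
Lemma kbarV (x : C) : in_kbar q T x -> in_kbar q T x^-1.
Proof. by move=> /kbar_algS hx; apply/kbar_algS/algS_inv. Qed.

Definition kbpred : pred C := fun x => `[< in_kbar q T x >].
Lemma kbpred_closed : GRing.divring_closed kbpred.
Proof.
split.
- by apply/asboolP; apply: kbar1.
- move=> x y /asboolP hx /asboolP hy; apply/asboolP; apply: kbarD => //; exact: kbarN.
- move=> x y /asboolP hx /asboolP hy; apply/asboolP; apply: kbarM => //; exact: kbarV.
Qed.
HB.instance Definition _ := GRing.isDivringClosed.Build C kbpred kbpred_closed.
Definition kbS : divringClosed C := GRing.DivringClosed.clone C kbpred _.

Lemma kbarp_div (m a : {poly C}) : kbar_poly q T m -> kbar_poly q T a -> kbar_poly q T (m %/ a).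
Proof.
move=> hm ha i.
have := @divp_inS _ kbS m a (fun j => introT (asboolP _) (hm j)) (fun j => introT (asboolP _) (ha j)) i.
by move/asboolP.
Qed.
End KB.

Section Ser.
Variable C : closedFieldType.
Implicit Types (g h k : series C) (a b : {poly C}).

Definition tr N (g : series C) : {poly C} := \poly_(i < N.+1) g i.
Definition coefs (a : {poly C}) : series C := fun i => a`_i.

Lemma smulE g h n N : (n <= N)%N -> smul g h n = (tr N g * tr N h)`_n.
Proof.
move=> hn; rewrite coefM; apply: eq_bigr => i _.
have hi : (i <= N)%N by apply: leq_trans hn; rewrite -ltnS.
by rewrite /tr !coef_poly ltnS hi ltnS (leq_trans (leq_subr _ _) hn).
Qed.

Lemma coefM_agree n (a a' b b' : {poly C}) :
  (forall i, (i <= n)%N -> a`_i = a'`_i) -> (forall i, (i <= n)%N -> b`_i = b'`_i) ->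
  (a * b)`_n = (a' * b')`_n.
Proof.
move=> ha hb; rewrite !coefM; apply: eq_bigr => i _.
by rewrite ha -1?ltnS // hb // leq_subr.
Qed.

Lemma smulC g h n : smul g h n = smul h g n.
Proof. by rewrite !(smulE _ _ (leqnn n)) mulrC. Qed.

Lemma smulA g h k n : smul g (smul h k) n = smul (smul g h) k n.
Proof.
have e1 : smul g (smul h k) n = (tr n g * (tr n h * tr n k))`_n.
  rewrite (smulE _ _ (leqnn n)); apply: coefM_agree => // i hi.
  by rewrite coef_poly ltnS hi (smulE _ _ hi).
have e2 : smul (smul g h) k n = ((tr n g * tr n h) * tr n k)`_n.
  rewrite (smulE _ _ (leqnn n)); apply: coefM_agree => // i hi.
  by rewrite coef_poly ltnS hi (smulE _ _ hi).
by rewrite e1 e2 mulrA.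
Qed.

Lemma smul_eql g g' h n : (forall i, g i = g' i) -> smul g h n = smul g' h n.
Proof. by move=> e; apply: eq_bigr => i _; rewrite e. Qed.
Lemma smul_eqr g h h' n : (forall i, h i = h' i) -> smul g h n = smul g h' n.
Proof. by move=> e; apply: eq_bigr => i _; rewrite e. Qed.

Lemma smul_sumr (I : Type) (l : seq I) (F : I -> series C) g n :
  smul g (fun m => \sum_(x <- l) F x m) n = \sum_(x <- l) smul g (F x) n.
Proof.
rewrite /smul; under eq_bigr do rewrite mulr_sumr.
by rewrite exchange_big.
Qed.

Lemma smul_scaler (c : C) g h n : smul g (fun m => c * h m) n = c * smul g h n.
Proof. by rewrite /smul mulr_sumr; apply: eq_bigr => i _; rewrite mulrCA. Qed.

Lemma smul_subr g h h' n : smul g (fun m => h m - h' m) n = smul g h n - smul g h' n.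
Proof. by rewrite /smul -sumrB; apply: eq_bigr => i _; rewrite mulrBr. Qed.

Lemma pmulE a g n : pmul a g n = smul (coefs a) g n.
Proof. by []. Qed.

Lemma pmulM a b g n : pmul (a * b) g n = pmul a (pmul b g) n.
Proof.
rewrite pmulE (@smul_eql _ (smul (coefs a) (coefs b))); last by move=> i; rewrite /coefs coefM.
by rewrite -smulA.
Qed.

Lemma pmulD a b g n : pmul (a + b) g n = pmul a g n + pmul b g n.
Proof. by rewrite /pmul -big_split; apply: eq_bigr => i _; rewrite coefD mulrDl. Qed.

Lemma pmul_smul a g h n : pmul a (smul g h) n = smul g (pmul a h) n.
Proof.
rewrite pmulE smulA (@smul_eql _ (smul g (coefs a))) ?smulA //.
by move=> i; rewrite smulC.
Qed.

Lemma pmul_cancel0 a d : a != 0 -> (forall n, pmul a d n = 0) -> forall n, d n = 0.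
Proof.
move=> a0 hd.
have ex : exists i, a`_i != 0 by exists (size a).-1; rewrite -lead_coefE lead_coef_eq0.
pose k := ex_minn ex.
have [hk kmin] : a`_k != 0 /\ forall i, (i < k)%N -> a`_i = 0.
  rewrite /k; case: ex_minnP => m hm mmin; split => // i hi.
  by apply/eqP; apply: contraTT hi => /mmin; rewrite -leqNgt.
elim/ltn_ind => n IH.
have := hd (n + k)%N; rewrite /pmul.
have kl : (k < (n + k).+1)%N by rewrite ltnS leq_addl.
rewrite (bigD1 (Ordinal kl)) //= big1 ?addr0 ?addnK.
  by move/eqP; rewrite mulf_eq0 (negbTE hk) => /eqP.
move=> i /eqP hik.
have [ilk | ikl] := ltnP i k; first by rewrite kmin // mul0r.
rewrite IH ?mulr0 //.
have : (k < i)%N by rewrite ltn_neqAle ikl andbT eq_sym; apply/eqP => e; apply: hik; apply: val_inj.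
have := ltn_ord i; rewrite ltnS.
move=> h1 h2; lia.
Qed.

Lemma pmul_cancel a d d' : a != 0 -> (forall n, pmul a d n = pmul a d' n) ->
  forall n, d n = d' n.
Proof.
move=> a0 h n; apply/eqP; rewrite -subr_eq0; apply/eqP.
apply: (@pmul_cancel0 a (fun m => d m - d' m)) => // m.
by rewrite pmulE smul_subr -!pmulE h subrr.
Qed.
End Ser.

Section Abs.
Variables (R : realType) (C : closedFieldType) (absC : C -> R).
Hypothesis habs : forall x, 0 <= absC x /\ (absC x = 0 <-> x = 0).
Hypothesis absM : forall x y, absC (x * y) = absC x * absC y.
Hypothesis absD : forall x y, absC (x + y) <= Num.max (absC x) (absC y).

Lemma abs_ge0 x : 0 <= absC x. Proof. by case: (habs x). Qed.
Lemma abs00 : absC 0 = 0. Proof. by case: (habs 0) => _ [_ ->]. Qed.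
Lemma abs_eq0 x : absC x = 0 -> x = 0. Proof. by case: (habs x) => _ []. Qed.
Lemma abs1 : absC 1 = 1.
Proof.
have h := absM 1 1; rewrite mulr1 in h.
have : absC 1 != 0 by apply/eqP => /abs_eq0 /eqP; rewrite oner_eq0.
move=> nz; apply: (mulIf nz); by rewrite mul1r -h.
Qed.
Lemma absN x : absC (- x) = absC x.
Proof.
have h1 : absC (-1) = 1.
  apply/eqP; rewrite -(@pexpr_eq1 _ _ 2) ?abs_ge0 // expr2 -absM mulrNN mulr1 abs1 //.
by rewrite -mulN1r absM h1 mul1r.
Qed.
Lemma absB x y : absC (x - y) <= Num.max (absC x) (absC y).
Proof. by rewrite -(absN y); apply: absD. Qed.
Lemma absX x n : absC (x ^+ n) = absC x ^+ n.
Proof. by elim: n => [|n IH]; rewrite ?expr0 ?abs1 // !exprS absM IH. Qed.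
Lemma abs_nat n : absC n%:R <= 1.
Proof.
elim: n => [|n IH]; first by rewrite abs00 ler01.
rewrite -addn1 natrD; apply: le_trans (absD _ _) _.
by rewrite ge_max IH abs1 lexx.
Qed.
Lemma abs_int (z : int) : absC z%:~R <= 1.
Proof. by case: z => n; rewrite ?NegzE ?mulrNz ?absN abs_nat. Qed.

Lemma abs_lt_sum (I : Type) (s : seq I) (P : pred I) (F : I -> C) (eps : R) :
  0 < eps -> (forall i, P i -> absC (F i) < eps) -> absC (\sum_(i <- s | P i) F i) < eps.
Proof.
move=> e0 h; apply: (big_ind (fun x => absC x < eps)) => //; first by rewrite abs00.
by move=> x y hx hy; apply: le_lt_trans (absD _ _) _; rewrite gt_max hx hy.
Qed.
Lemma abs_le_sum (I : Type) (s : seq I) (P : pred I) (F : I -> C) (eps : R) :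
  0 <= eps -> (forall i, P i -> absC (F i) <= eps) -> absC (\sum_(i <- s | P i) F i) <= eps.
Proof.
move=> e0 h; apply: (big_ind (fun x => absC x <= eps)) => //; first by rewrite abs00.
by move=> x y hx hy; apply: le_trans (absD _ _) _; rewrite ge_max hx hy.
Qed.

Lemma abs_dom x y : absC y < absC x -> absC (x + y) = absC x.
Proof.
move=> h; apply/eqP; rewrite eq_le; apply/andP; split.
  by apply: le_trans (absD _ _) _; rewrite ge_max lexx ltW.
have := absB (x + y) y; rewrite addrK.
case: (leP (absC (x + y)) (absC y)) => h2 h3.
  by have := lt_le_trans h h3; rewrite ltxx.
by [].
Qed.

Definition null (u : series C) := forall eps : R, 0 < eps ->
  exists N, forall n, (N <= n)%N -> absC (u n) < eps.

Lemma null_ext u v : (forall n, u n = v n) -> null u -> null v.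
Proof. by move=> e h eps /h [N hN]; exists N => n /hN; rewrite e. Qed.

Lemma Tate_null g : in_Tate absC g -> null g.
Proof.
move=> /(_ 1); rewrite abs1 lexx => /(_ isT) [l hl] eps e0.
have [N hN] := hl eps e0; exists N => n hn.
have -> : g n = (\sum_(i < n.+1) g i * 1 ^+ i) - \sum_(i < n) g i * 1 ^+ i.
  by rewrite big_ord_recr /= expr1n mulr1 addrAC subrr add0r.
rewrite -(subrKA l); apply: le_lt_trans (absD _ _) _; rewrite gt_max.
rewrite hN ?(leq_trans hn) //=; rewrite -opprB absN hN //.
Qed.

Lemma null_bounded u : null u -> exists B, 0 < B /\ forall n, absC (u n) <= B.
Proof.
move=> /(_ 1 ltr01) [N hN].
exists (1 + \sum_(i < N) absC (u i)); split.
  by rewrite ltr_wpDr ?ltr01 // sumr_ge0 // => i _; apply: abs_ge0.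
move=> n; have [nN|Nn] := ltnP n N.
  rewrite (bigD1 (Ordinal nN)) //= addrCA ler_wpDr //.
  by rewrite addr_ge0 ?ler01 // sumr_ge0 // => i _; apply: abs_ge0.
rewrite ler_wpDr ?(ltW (hN _ Nn)) //.
by rewrite sumr_ge0 // => i _; apply: abs_ge0.
Qed.

Lemma null_add u v : null u -> null v -> null (fun n => u n + v n).
Proof.
move=> hu hv eps e0; have [N1 h1] := hu _ e0; have [N2 h2] := hv _ e0.
exists (N1 + N2)%N => n hn; apply: le_lt_trans (absD _ _) _.
by rewrite gt_max h1 ?h2 //; lia.
Qed.
Lemma null0 : null (fun _ => 0).
Proof. by move=> eps e0; exists 0%N => n _; rewrite abs00. Qed.
Lemma null_zscale (z : int) u : null u -> null (fun n => z%:~R * u n).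
Proof.
move=> hu eps e0; have [N h] := hu _ e0; exists N => n hn.
rewrite absM; apply: le_lt_trans (h _ hn).
by rewrite -{2}(mul1r (absC (u n))) ler_wpM2r ?abs_ge0 ?abs_int.
Qed.

Lemma null_smul g h : null g -> null h -> null (smul g h).
Proof.
move=> hg hh; have [Bg [Bg0 hBg]] := null_bounded hg.
have [Bh [Bh0 hBh]] := null_bounded hh.
move=> eps e0.
have [N1 h1] := hg (eps / Bh) (divr_gt0 e0 Bh0).
have [N2 h2] := hh (eps / Bg) (divr_gt0 e0 Bg0).
exists (N1 + N2)%N => n hn; apply: abs_lt_sum => // i _; rewrite absM.
have [iN1|iN1] := leqP N1 i.
  apply: (@le_lt_trans _ _ (absC (g i) * Bh)); first exact: (ler_wpM2l (abs_ge0 _) (hBh _)).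
  by rewrite -ltr_pdivlMr // h1.
have hn2 : (N2 <= n - i)%N by lia.
apply: (@le_lt_trans _ _ (Bg * absC (h (n - i)%N))); first exact: (ler_wpM2r (abs_ge0 _) (hBg i)).
by rewrite mulrC -ltr_pdivlMr // h2.
Qed.

Lemma abs_lt0_eq0 x : (forall eps, 0 < eps -> absC x < eps) -> x = 0.
Proof.
move=> h; apply: abs_eq0; apply/eqP; rewrite eq_le abs_ge0 andbT.
by rewrite leNgt; apply/negP => /[dup] /h; rewrite ltxx.
Qed.

Lemma poly_null (b : {poly C}) : null (fun i => b`_i).
Proof.
move=> eps e0; exists (size b) => n hn; by rewrite nth_default // abs00.
Qed.

Lemma root_null (b m : {poly C}) (w : series C) z : absC z <= 1 -> root b z -> null w ->
  (forall n, m`_n = pmul b w n) -> root m z.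
Proof.
move=> hz hb hw hm; apply/eqP/abs_lt0_eq0 => eps e0.
have [Bb [Bb0 hBb]] := null_bounded (poly_null b).
have [N hN] := hw (eps / Bb) (divr_gt0 e0 Bb0).
set sb := size b; set n := (N + sb + size m)%N.
pose P : {poly C} := \poly_(i < n) w i.
have hP : forall i, (i < n)%N -> (b * P)`_i = m`_i.
  move=> i hi; rewrite hm coefM /pmul; apply: eq_bigr => j _.
  by rewrite coef_poly (leq_ltn_trans (leq_subr _ _) hi).
have htail : forall k, (k < sb)%N -> absC ((b * P)`_(n + k) * z ^+ (n + k)) < eps.
  move=> k hk; rewrite absM absX.
  apply: (@le_lt_trans _ _ (absC (b * P)`_(n + k))).
    have h1 : absC z ^+ (n + k) <= 1 by apply: exprn_ile1; rewrite ?abs_ge0.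
    by have := ler_wpM2l (abs_ge0 ((b * P)`_(n + k))) h1; rewrite mulr1.
  rewrite coefM; apply: abs_lt_sum => // j _; rewrite coef_poly.
  case: ifP => hj; last by rewrite mulr0 abs00.
  have [jb|jb] := ltnP j sb; last by rewrite nth_default // mul0r abs00.
  rewrite absM; apply: le_lt_trans (ler_wpM2r (abs_ge0 _) (hBb j)) _.
  rewrite mulrC -ltr_pdivlMr // hN //.
  move: hj jb (ltn_ord j); rewrite /n /sb; lia.
have e0' : (b * P).[z] = 0 by rewrite hornerM (rootP hb) mul0r.
have hs : (size (b * P)%R <= n + sb)%N.
  apply: leq_trans (size_polyMleq _ _) _.
  have := size_poly n w; rewrite /P /n /sb; lia.
rewrite (horner_coef_wide z hs) big_split_ord /= in e0'.
have e1 : \sum_(i < n) (b * P)`_(lshift sb i) * z ^+ (lshift sb i) = m.[z].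
  have hsm : (size m <= n)%N by rewrite /n; lia.
  apply: esym; apply: etrans (horner_coef_wide z hsm) _.
  by apply: eq_bigr => i _; rewrite hP //; exact: (ltn_ord i).
rewrite e1 in e0'; move/eqP: e0'; rewrite addr_eq0 => /eqP ->; rewrite absN.
by apply: abs_lt_sum => // k _; apply: htail.
Qed.

Lemma Fq_abs (q : nat) x : (1 < q)%N -> Fq q x -> x != 0 -> absC x = 1.
Proof.
move=> q1 hx x0; apply/eqP; rewrite -(@pexpr_eq1 _ _ q.-1) ?abs_ge0 //; last lia.
rewrite -absX; have -> : x ^+ q.-1 = 1.
  apply: (mulIf x0); rewrite mul1r -exprSr prednK ?hx //; lia.
by rewrite abs1.
Qed.
Lemma Fq_abs_le1 (q : nat) x : (1 < q)%N -> Fq q x -> absC x <= 1.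
Proof.
move=> q1 hx; have [->|x0] := eqVneq x 0; first by rewrite abs00 ler01.
by rewrite (Fq_abs q1 hx x0).
Qed.

Lemma root_Fq_le1 (q : nat) (a : {poly C}) z : (1 < q)%N -> Fq_poly q a -> a != 0 ->
  root a z -> absC z <= 1.
Proof.
move=> q1 ha a0 hr; rewrite leNgt; apply/negP => z1.
have za : 0 < absC z by apply: lt_trans z1.
move/rootP: hr; rewrite horner_coef.
have : size a = (size a).-1.+1 by rewrite prednK // size_poly_gt0.
move: (size a).-1 => d hd; rewrite hd big_ord_recr /= addrC => hr.
have hl : absC (a`_d * z ^+ d) = absC z ^+ d.
  rewrite absM absX (Fq_abs q1 (ha d)) ?mul1r //.
  by have := a0; rewrite -lead_coef_eq0 lead_coefE hd.
have : absC (a`_d * z ^+ d + \sum_(i < d) a`_i * z ^+ i) = absC z ^+ d.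
  rewrite abs_dom hl //; apply: abs_lt_sum; first by rewrite exprn_gt0.
  move=> i _; rewrite absM absX; apply: (@le_lt_trans _ _ (absC z ^+ i)).
    by have := ler_wpM2r (exprn_ge0 i (abs_ge0 z)) (Fq_abs_le1 q1 (ha i)); rewrite mul1r.
  by rewrite ltr_eXn2l.
rewrite hr abs00 => /esym/eqP; by rewrite expf_eq0 (gt_eqF za) andbF.
Qed.

Lemma div_null (b m : {poly C}) (w : series C) : b != 0 ->
  (forall z, root b z -> absC z <= 1) -> null w ->
  (forall n, m`_n = pmul b w n) -> b %| m.
Proof.
have [k] := ubnP (size b); elim: k b m => // k IH b m hk b0 hroot hw hm.
have [hs|hs] := eqVneq (size b) 1%N.
  have hb : b = (b`_0)%:P by apply: size1_polyC; rewrite hs.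
  have c0 : b`_0 != 0 by apply: contra b0; rewrite {2}hb => /eqP ->.
  apply/dvdpP; exists ((b`_0)^-1%:P * m).
  move: c0 hb; set c := b`_0 => c0 ->.
  by rewrite mulrAC -polyCM mulVf // mul1r.
have [z hz] := closed_rootP b hs.
have /dvdpP [b' hb'] : ('X - z%:P) %| b by rewrite -root_factor_theorem.
have mz : root m z by apply: (root_null (hroot z hz) hz hw hm).
have /dvdpP [m' hm'] : ('X - z%:P) %| m by rewrite -root_factor_theorem.
have b'0 : b' != 0 by apply: contra b0; rewrite hb' => /eqP ->; rewrite mul0r.
have Xz0 : 'X - z%:P != 0 by rewrite polyXsubC_eq0.
have hm2 : forall n, m'`_n = pmul b' w n.
  apply: (@pmul_cancel _ ('X - z%:P) (coefs m') (pmul b' w)) => // n.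
  rewrite -pmulM mulrC -hb' -hm; rewrite hm' mulrC.
  by rewrite /pmul coefM.
have hd : b' %| m'.
  apply: (IH b' m') => //.
  - move: hk; rewrite hb' size_mul // size_XsubC addn2 /=; by rewrite ltnS.
  - by move=> z' hz'; apply: hroot; rewrite hb' rootM hz'.
by rewrite hb' hm'; apply: dvdp_mul => //; apply: dvdpp.
Qed.
End Abs.

Section Morph.
Variables (C : closedFieldType) (q p e : nat).
Hypotheses (pp : prime p) (e0 : (0 < e)%N) (qE : q = (p ^ e)%N) (pC : p \in [pchar C]).
Variable T : C.
Let kbarpD := kbarpD pp e0 qE pC (T := T).
Let kbarpM := kbarpM pp e0 qE pC (T := T).
Let kbarpC := kbarpC pp e0 qE pC (T := T).
Let kbarpX := kbarpX pp e0 qE pC T.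
Let kbar0 := kbar0 pp e0 qE pC T.
Let kbar1 := kbar1 pp e0 qE pC T.
Let kbarp_sum := kbarp_sum pp e0 qE pC (T := T).

Lemma kbarp0 : kbar_poly q T 0.
Proof. by rewrite -[0]/(0%:P); apply: kbarpC. Qed.

Lemma inH_add r (h h' : 'cV[{poly C}]_r) : in_H q T h -> in_H q T h' -> in_H q T (h + h').
Proof. by move=> a b i; rewrite mxE; apply: kbarpD. Qed.
Lemma inH_scale r (c : {poly C}) (h : 'cV[{poly C}]_r) : kbar_poly q T c -> in_H q T h -> in_H q T (c *: h).
Proof. by move=> a b i; rewrite mxE; apply: kbarpM. Qed.
Lemma inH0 r : in_H q T (0 : 'cV[{poly C}]_r).
Proof. by move=> i; rewrite mxE; apply: kbarp0. Qed.
Lemma inH_sum r n (F : 'I_n -> 'cV[{poly C}]_r) : (forall i, in_H q T (F i)) -> in_H q T (\sum_(i < n) F i).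
Proof. by move=> h; apply: (big_ind (@in_H C q T r)) => //; [apply: inH0 | move=> ??; apply: inH_add]. Qed.
Lemma inH_delta r (j : 'I_r) : in_H q T (delta_mx j 0).
Proof.
move=> i; rewrite mxE; case: (_ && _); rewrite ?mulr1n ?mulr0n; last exact: kbarp0.
by rewrite -[1]/(1%:P); apply: kbarpC.
Qed.
Lemma inH_mulmx r r' (M : 'M[{poly C}]_(r', r)) (h : 'cV[{poly C}]_r) :
  (forall i j, kbar_poly q T (M i j)) -> in_H q T h -> in_H q T (M *m h).
Proof. by move=> hM hh i; rewrite mxE; apply: kbarp_sum => j _; apply: kbarpM. Qed.

Variables (r0 r1 : nat) (Phi0 : 'M[{poly C}]_r0) (Phi1 : 'M[{poly C}]_r1).

Lemma morph_mulmx f : is_morphism q T Phi0 Phi1 f ->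
  forall h, in_H q T h -> f h = morph_mx f *m h.
Proof.
case=> fH fD fC fX fS.
have f0 : f 0 = 0.
  have := fD 0 0 (@inH0 r0) (@inH0 r0); rewrite addr0 => /eqP.
  by rewrite -subr_eq0 opprD addrA subrr add0r oppr_eq0 => /eqP.
have fsum : forall n (F : 'I_n -> 'cV[{poly C}]_r0), (forall i, in_H q T (F i)) ->
    f (\sum_(i < n) F i) = \sum_(i < n) f (F i).
  elim=> [|n IH] F hF; first by rewrite !big_ord0.
  rewrite !big_ord_recr /= fD ?IH //; first exact: inH_sum.
have inHX : forall k (x : 'cV[{poly C}]_r0), in_H q T x -> in_H q T ('X^k *: x).
  elim=> [|k IHk] x hx; first by rewrite expr0 scale1r.
  by rewrite exprSr -scalerA; apply: IHk; apply: inH_scale => //; apply: kbarpX.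
have fXn : forall k x, in_H q T x -> f ('X^k *: x) = 'X^k *: f x.
  elim=> [|k IH] x hx; first by rewrite !expr0 !scale1r.
  rewrite exprSr -!scalerA IH; first by rewrite fX.
  by apply: inH_scale => //; apply: kbarpX.
have fP : forall (P : {poly C}) x, kbar_poly q T P -> in_H q T x -> f (P *: x) = P *: f x.
  move=> P x hP hx; rewrite -(coefK P) poly_def !scaler_suml fsum; last first.
    by move=> i; rewrite -mul_polyC -scalerA; apply: inH_scale; [apply: kbarpC | apply: inHX].
  apply: eq_bigr => i _; rewrite -mul_polyC -!scalerA fC //; first by rewrite fXn.
  exact: inHX.
move=> h hh.
have hE : h = \sum_(j < r0) h j 0 *: delta_mx j 0.
  rewrite {1}(matrix_sum_delta h); apply: eq_bigr => j _.
  by rewrite big_ord1.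
rewrite [in LHS]hE fsum; last by move=> j; apply: inH_scale => //; apply: inH_delta.
apply/matrixP => i k; rewrite ord1 !mxE summxE; apply: eq_bigr => j _.
rewrite fP //; last exact: inH_delta.
by rewrite !mxE mulrC.
Qed.
End Morph.

Section Main.
Variables (R : realType) (C : closedFieldType) (absC : C -> R) (q : nat) (T : C).
Variables (p e : nat).
Hypotheses (pp : prime p) (e0 : (0 < e)%N) (qE : q = (p ^ e)%N) (pC : p \in [pchar C]).
Hypothesis habs : forall x, 0 <= absC x /\ (absC x = 0 <-> x = 0).
Hypothesis absM : forall x y, absC (x * y) = absC x * absC y.
Hypothesis absD : forall x y, absC (x + y) <= Num.max (absC x) (absC y).

Let null_addM := null_add absD.
Let null0M := null0 habs.
Let null_zscaleM := null_zscale habs absM absD.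
Let null_smulM := null_smul habs absM absD.
Let Tate_nullM := Tate_null habs absM absD.
Let root_Fq_le1M := root_Fq_le1 habs absM absD.
Let div_nullM := div_null habs absM absD.

Let inH_mulmxM := @inH_mulmx C q p e pp e0 qE pC T.
Let inH_deltaM := @inH_delta C q p e pp e0 qE pC T.

Definition MA r0 r1 (M : 'M[{poly C}]_(r1, r0)) (v : svec C r0) : svec C r1 :=
  fun i n => \sum_(j < r0) pmul (M i j) (v j) n.
Definition ej r (j : 'I_r) : svec C r :=
  fun i n => if (i == j) && (n == 0%N) then 1 else 0.

Lemma ej_Htilde r (j : 'I_r) : in_Htilde absC (ej j).
Proof.
move=> i z hz; exists (if i == j then 1 else 0) => eps he; exists 1%N.
case=> // n _; rewrite big_ord_recl big1 ?addr0.
  by rewrite /ej /= andbT expr0 mulr1 subrr (abs00 habs).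
by move=> k _; rewrite /ej /= andbF mul0r.
Qed.

Lemma MA_ej r0 r1 (M : 'M[{poly C}]_(r1, r0)) j i n : MA M (ej j) i n = (M i j)`_n.
Proof.
rewrite /MA (bigD1 j) //= big1 ?addr0.
  rewrite /pmul (bigD1 ord_max) //= big1 ?addr0 /ej ?eqxx ?subnn ?mulr1 //.
  move=> k hk /=; case: eqP => [h|]; last by rewrite mulr0.
  exfalso; move/eqP: hk; apply; apply: val_inj => /=.
  by have := ltn_ord k; rewrite ltnS => hk; apply/eqP; rewrite eqn_leq hk -subn_eq0 h.
move=> k hk; rewrite /pmul big1 // => m _; rewrite /ej (negbTE hk) /= mulr0 //.
Qed.

Lemma pmul_lin (I : Type) (l : seq I) (P : {poly C}) (c : I -> C) (F : I -> series C) n :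
  pmul P (fun m => \sum_(x <- l) c x * F x m) n = \sum_(x <- l) c x * pmul P (F x) n.
Proof.
rewrite pmulE smul_sumr; apply: eq_bigr => x _.
by rewrite smul_scaler.
Qed.

Lemma pmul_sum r (P : {poly C}) (F : 'I_r -> series C) n :
  pmul P (fun m => \sum_(k < r) F k m) n = \sum_(k < r) pmul P (F k) n.
Proof. by rewrite pmulE smul_sumr. Qed.

Lemma MA_natimg r0 r1 (M : 'M[{poly C}]_(r1, r0)) (l : formal C r0) i n :
  MA M (nat_img l) i n = \sum_(x <- l) x.1%:~R * smul x.2.1 (MA M x.2.2 i) n.
Proof.
rewrite /MA /nat_img.
under eq_bigr do rewrite (pmul_lin l (M i _) (fun x => x.1%:~R) (fun x => smul x.2.1 (x.2.2 _))).
rewrite exchange_big /=; apply: eq_bigr => x _.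
rewrite -mulr_sumr smul_sumr; congr (_ * _); apply: eq_bigr => k _.
by rewrite pmul_smul.
Qed.

Lemma sum_In_eq (I : Type) (l : seq I) (F G : I -> C) :
  (forall x, List.In x l -> F x = G x) -> \sum_(x <- l) F x = \sum_(x <- l) G x.
Proof.
elim: l => [|y l IH] h; first by rewrite !big_nil.
rewrite !big_cons h /=; last by left.
by rewrite IH // => x hx; apply: h; right.
Qed.

Lemma null_sum_In (I : Type) (l : seq I) (F : I -> series C) :
  (forall x, List.In x l -> null absC (F x)) -> null absC (fun n => \sum_(x <- l) F x n).
Proof.
elim: l => [|y l IH] h.
  by apply: (null_ext (u := fun _ => 0)) => [n|]; rewrite ?big_nil //; apply: null0M.
apply: (null_ext (u := fun n => F y n + \sum_(x <- l) F x n)) => [n|].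
  by rewrite big_cons.
apply: null_addM; first exact: (h y (or_introl erefl)).
by apply: IH => x hx; exact: (h x (or_intror hx)).
Qed.

Lemma ptwistE (P : {poly C}) : ptwist q P = map_poly (qroot q) P.
Proof. by []. Qed.
Lemma ptw_coef (P : {poly C}) i : (ptwist q P)`_i = qroot q P`_i.
Proof. by rewrite ptwistE coef_map_id0 // (qroot0 pp e0 qE pC). Qed.
Lemma ptwD (P Q : {poly C}) : ptwist q (P + Q) = ptwist q P + ptwist q Q.
Proof. by apply/polyP => i; rewrite coefD !ptw_coef coefD (qrootD pp e0 qE pC). Qed.
Lemma qroot_sum (I : Type) (s : seq I) (F : I -> C) :
  qroot q (\sum_(i <- s) F i) = \sum_(i <- s) qroot q (F i).
Proof.
elim: s => [|y s IH]; first by rewrite !big_nil (qroot0 pp e0 qE pC).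
by rewrite !big_cons (qrootD pp e0 qE pC) IH.
Qed.
Lemma ptwM (P Q : {poly C}) : ptwist q (P * Q) = ptwist q P * ptwist q Q.
Proof.
apply/polyP => i; rewrite ptw_coef !coefM qroot_sum; apply: eq_bigr => j _.
by rewrite (qrootM pp e0 qE pC) !ptw_coef.
Qed.
Lemma ptw_sum r (F : 'I_r -> {poly C}) : ptwist q (\sum_(k < r) F k) = \sum_(k < r) ptwist q (F k).
Proof.
apply/polyP => i; rewrite ptw_coef !coef_sum qroot_sum; apply: eq_bigr => k _.
by rewrite ptw_coef.
Qed.
Lemma ptwC (c : C) : ptwist q c%:P = (qroot q c)%:P.
Proof.
apply/polyP => i; rewrite ptw_coef !coefC; case: eqP => // _.
exact: (qroot0 pp e0 qE pC).
Qed.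
Lemma ptwFq (P : {poly C}) : Fq_poly q P -> ptwist q P = P.
Proof. by move=> h; apply/polyP => i; rewrite ptw_coef (qrootFq pp e0 qE pC). Qed.

Lemma vtwist_mulmx r r' (A : 'M[{poly C}]_(r', r)) (h : 'cV[{poly C}]_r) :
  vtwist q (A *m h) = map_mx (ptwist q) A *m vtwist q h.
Proof.
apply/matrixP => i k; rewrite !mxE ptw_sum; apply: eq_bigr => j _.
by rewrite ptwM !mxE.
Qed.

Lemma vtwist_delta r (j : 'I_r) : vtwist q (delta_mx j 0 : 'cV[{poly C}]_r) = delta_mx j 0.
Proof.
apply/matrixP => i k; rewrite !mxE; case: (_ && _); rewrite ?mulr1n ?mulr0n.
  by rewrite -[1]/(1%:P) ptwC (qroot1 pp e0 qE pC).
by rewrite -[0]/(0%:P) ptwC (qroot0 pp e0 qE pC).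
Qed.


Lemma morph_mx_mulmx r0 r1 (N : 'M[{poly C}]_(r1, r0)) : morph_mx (fun h => N *m h) = N.
Proof. by apply/matrixP => i j; rewrite mxE -colE mxE. Qed.

Lemma part1 r0 r1 (Phi0 : 'M[{poly C}]_r0) (Phi1 : 'M[{poly C}]_r1) :
  rigid_analytically_trivial absC q Phi0 ->
  forall f f' : 'cV[{poly C}]_r0 -> 'cV[{poly C}]_r1,
  is_morphism q T Phi0 Phi1 f -> is_morphism q T Phi0 Phi1 f' ->
  (forall v, in_Betti absC q Phi0 v -> forall i n, betti_map f v i n = betti_map f' v i n) ->
  forall h, in_H q T h -> f h = f' h.
Proof.
move=> [rat0 _] f f' hf hf' heq h hh.
rewrite (morph_mulmx pp e0 qE pC hf hh) (morph_mulmx pp e0 qE pC hf' hh).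
congr (_ *m _); apply/matrixP => i j; apply/polyP => n.
have [l [lv hl]] := rat0 (ej j) (ej_Htilde j).
have el : ej j = nat_img l by apply/funext => k; apply/funext => m; rewrite hl.
rewrite -!MA_ej el !MA_natimg; apply: sum_In_eq => x hx; congr (_ * _).
by apply: smul_eqr => m; apply: heq; case: (lv x hx).
Qed.

Lemma part2 r0 r1 (Phi0 : 'M[{poly C}]_r0) (Phi1 : 'M[{poly C}]_r1) :
  is_dual_tmotive q T Phi0 ->
  rigid_analytically_trivial absC q Phi0 ->
  forall (psi : svec C r0 -> svec C r1) (a : {poly C}),
     is_Fqt_hom absC q Phi0 Phi1 psi -> Fq_poly q a -> a != 0 ->
     (exists f, is_morphism q T Phi0 Phi1 f /\
        forall v, in_Betti absC q Phi0 v ->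
          forall i n, betti_map f v i n = vact a (psi v) i n) ->
     exists g, is_morphism q T Phi0 Phi1 g /\
        forall v, in_Betti absC q Phi0 v ->
          forall i n, betti_map g v i n = psi v i n.
Proof.
move=> [hPhi0 _ _] [rat0 _] psi a [hpB _ _] ha a0 [f [hf hfa]].
set M := morph_mx f.
have hdiv : forall i j, a %| M i j.
  move=> i j; have [l [lv hl]] := rat0 (ej j) (ej_Htilde j).
  have el : ej j = nat_img l by apply/funext => k; apply/funext => m; rewrite hl.
  apply: (div_nullM (w := fun m => \sum_(x <- l) x.1%:~R * smul x.2.1 (psi x.2.2 i) m)) => //.
  - by move=> z; apply: root_Fq_le1M (q_gt1 pp e0 qE) ha a0.
  - apply: null_sum_In => x hx; apply: null_zscaleM; apply: null_smulM.
      exact: Tate_nullM (lv x hx).1.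
    have [hb _] := hpB _ (lv x hx).2; exact: Tate_nullM (hb i).
  - move=> n; rewrite -MA_ej el MA_natimg pmul_lin; apply: sum_In_eq => x hx.
    congr (_ * _); rewrite pmul_smul; apply: smul_eqr => m.
    exact: hfa (lv x hx).2 i m.
pose N := \matrix_(i, j) (M i j %/ a).
have hMN : forall i j, M i j = a * N i j by move=> i j; rewrite [N i j]mxE divpKC // hdiv.
have hM_eq : M = a *: N by apply/matrixP => i j; rewrite [RHS]mxE -hMN.
have hf' := hf; case: hf' => fH _ _ _ fS.
have hMk : forall i j, kbar_poly q T (M i j).
  by move=> i j; rewrite mxE; exact: (fH _ (inH_deltaM j) i).
have hNk : forall i j, kbar_poly q T (N i j).
  move=> i j; rewrite mxE; apply: (kbarp_div pp e0 qE pC) => //.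
  exact: (kbarp_Fq pp e0 qE pC).
have hMsig : M *m Phi0 = Phi1 *m map_mx (ptwist q) M.
  apply/matrixP => i j.
  have hj := fS (delta_mx j 0) (inH_deltaM j).
  rewrite /sigH vtwist_delta in hj.
  rewrite (morph_mulmx pp e0 qE pC hf) in hj; last first.
    exact: (inH_mulmxM hPhi0 (inH_deltaM j)).
  rewrite (morph_mulmx pp e0 qE pC hf (inH_deltaM j)) in hj.
  rewrite vtwist_mulmx vtwist_delta !mulmxA in hj.
  by move/matrixP/(_ i 0): hj; rewrite -!colE !mxE.
have hsig : N *m Phi0 = Phi1 *m map_mx (ptwist q) N.
  have hmap : map_mx (ptwist q) M = a *: map_mx (ptwist q) N.
    by apply/matrixP => i j; rewrite [map_mx _ M i j]mxE [(a *: map_mx _ N) i j]mxE [map_mx _ N i j]mxE hMN ptwM ptwFq.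
  rewrite hmap hM_eq -scalemxAl -scalemxAr in hMsig.
  apply/matrixP => i j; move/matrixP/(_ i j): hMsig; rewrite !mxE.
  by move/mulfI; apply.
exists (fun h => N *m h); split.
- split.
  + by move=> h hh; apply: inH_mulmxM.
  + by move=> h h' _ _; rewrite mulmxDr.
  + by move=> c h _ _; rewrite scalemxAr.
  + by move=> h _; rewrite scalemxAr.
  + by move=> h _; rewrite /sigH mulmxA hsig -mulmxA vtwist_mulmx.
- move=> v hv i n.
  apply: (@pmul_cancel _ a) => // m.
  have := hfa v hv i m; rewrite /vact => <-.
  rewrite /betti_map morph_mx_mulmx pmul_sum.
  by apply: eq_bigr => k _; rewrite -pmulM -hMN.
Qed.
End Main.

Unset Implicit Arguments.
Set Strict Implicit.
Theorem theorem4 (R : realType) (C : closedFieldType) (absC : C -> R)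
    (q : nat) (T : C) (r0 r1 : nat)
    (Phi0 : 'M[{poly C}]_r0) (Phi1 : 'M[{poly C}]_r1) :
  is_Cinf absC q T ->
  is_dual_tmotive q T Phi0 -> is_dual_tmotive q T Phi1 ->
  rigid_analytically_trivial absC q Phi0 ->
  rigid_analytically_trivial absC q Phi1 ->
  (* injectivity of Hom(H0,H1) -> Hom_{F_q[t]}(H0^Betti, H1^Betti) *)
  (forall f f' : 'cV[{poly C}]_r0 -> 'cV[{poly C}]_r1,
     is_morphism q T Phi0 Phi1 f -> is_morphism q T Phi0 Phi1 f' ->
     (forall v, in_Betti absC q Phi0 v ->
        forall i n, betti_map f v i n = betti_map f' v i n) ->
     forall h, in_H q T h -> f h = f' h) /\
  (* the cokernel has no F_q[t]-torsion *)
  (forall (psi : svec C r0 -> svec C r1) (a : {poly C}),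
     is_Fqt_hom absC q Phi0 Phi1 psi -> Fq_poly q a -> a != 0 ->
     (exists f, is_morphism q T Phi0 Phi1 f /\
        forall v, in_Betti absC q Phi0 v ->
          forall i n, betti_map f v i n = vact a (psi v) i n) ->
     exists g, is_morphism q T Phi0 Phi1 g /\
        forall v, in_Betti absC q Phi0 v ->
          forall i n, betti_map g v i n = psi v i n).
Proof.
move=> [[p [e [pp e0 qE pC]]] habs absM absD _] hd0 hd1 rat0 rat1; split.
- exact: (part1 pp e0 qE pC habs rat0).
- exact: (part2 pp e0 qE pC habs absM absD hd0 rat0).
Qed.
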